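(* Assume (A1). Let $\delta>0$, $\beta>0$, and $\mathcal R=\{r_1,\dots,r_m\}$ with positive integers $r_1<\dots<r_m\le t$. Suppose the event $E$ described in the context holds. Then for every $1\le k\le m-1$, $$\lVert\hat{\bm C}^{[r_k]}(t)-\hat{\bm C}^{[r_{k+1}]}(t)\rVert_\infty\le\mathcal T(k)\ \Longrightarrow\ \mathcal B(r_{k+1})\le\mathcal B(r_k).$$
   Context: For matrices $\lVert\bm M\rVert_\infty=\max_{i,j}|M_{ij}|$. Let $\ell_1,\dots,\ell_n:\mathbb{R}^d\to\{-1,1\}$ be functions and $X_1,X_2,\dots$ random inputs with $X_k\sim D_k$; (A1): for every finite $t$, $(X_1,\dots,X_t)\sim\prod_{k=1}^tD_k$. Correlation matrix $C_{ij}(k)=\mathbb{E}_{X\sim D_k}[\ell_i(X)\ell_j(X)]$; $\bm C^{[r]}(t)=\frac1r\sum_{k=t-r+1}^t\bm C(k)$; $\hat{\bm C}^{[r]}(t)=\frac1r\sum_{k=t-r+1}^t\bm v_k\bm v_k^T$ with $\bm v_k=(\ell_1(X_k),\dots,\ell_n(X_k))^T$. Let $A_{\delta,n,m}=\sqrt{2\ln[(2m-1)n(n-1)/\delta]}$ and $\gamma_M=\max_{1\le k\le m-1}\sqrt{r_k/r_{k+1}}$. Define $\mathcal B(r)=\frac{A_{\delta,n,m}}{\sqrt r}\cdot\frac{2\beta+2}{1-\gamma_M}+\lVert\bm C(t)-\bm C^{[r]}(t)\rVert_\infty$ and, for $k\le m-1$, $\mathcal T(k)=\frac{2\beta A_{\delta,n,m}}{\sqrt{r_k}}+A_{\delta,n,m}\sqrt{\frac{1-r_k/r_{k+1}}{r_k}}$.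 The event $E$: for all $k\le m$, $\lVert\bm C(t)-\hat{\bm C}^{[r_k]}(t)\rVert_\infty\le\frac{A_{\delta,n,m}}{\sqrt{r_k}}+\lVert\bm C(t)-\bm C^{[r_k]}(t)\rVert_\infty$, and for all $k\le m-1$, $\lVert\bm C^{[r_k]}(t)-\bm C^{[r_{k+1}]}(t)-\hat{\bm C}^{[r_k]}(t)+\hat{\bm C}^{[r_{k+1}]}(t)\rVert_\infty\le A_{\delta,n,m}\sqrt{\frac{1-r_k/r_{k+1}}{r_k}}$. *)

(* Defs.v *)
From HB Require Import structures.
From mathcomp Require Import all_boot all_order all_algebra.
From mathcomp Require Import all_classical all_reals all_analysis.
Set Implicit Arguments. Unset Strict Implicit. Unset Printing Implicit Defensive.
Import Order.TTheory GRing.Theory Num.Theory.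
Local Open Scope classical_set_scope.
Local Open Scope ring_scope.

(* Inputs live in R^d, represented as d.-tuple R with the product sigma-algebra. *)

Definition supnorm (R : realType) (n : nat) (M : 'M[R]_n) : R :=
  \big[Num.max/0]_(i < n) \big[Num.max/0]_(j < n) `|M i j|.

(* (A1): for every finite t, (X_1,...,X_t) ~ D_1 x ... x D_t, i.e. the joint law
   of (X_1,...,X_t) is the product of the marginal laws D_k (tested on all
   measurable rectangles, which determine the product measure). *)
Definition assumption_A1 (R : realType) (dO : measure_display) (Omega : measurableType dO)
  (P : probability Omega R) (d : nat)
  (X : nat -> {mfun Omega >-> d.-tuple R}) : Prop :=
  forall (t : nat) (B : nat -> set (d.-tuple R)),
    (forall k, measurable (B k)) ->
    P (\bigcap_(k in [set k | (1 <= k <= t)%N]) (X k @^-1` B k))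
    = (\prod_(1 <= k < t.+1) P (X k @^-1` B k))%E.

Definition Cmat (R : realType) (dO : measure_display) (Omega : measurableType dO)
  (P : probability Omega R) (d n : nat) (l : 'I_n -> d.-tuple R -> R)
  (X : nat -> {mfun Omega >-> d.-tuple R}) (k : nat) : 'M[R]_n :=
  \matrix_(i, j) fine (\int[distribution P (X k)]_x (l i x * l j x)%:E).

Definition Cbar (R : realType) (dO : measure_display) (Omega : measurableType dO)
  (P : probability Omega R) (d n : nat) (l : 'I_n -> d.-tuple R -> R)
  (X : nat -> {mfun Omega >-> d.-tuple R}) (r t : nat) : 'M[R]_n :=
  r%:R^-1 *: \sum_((t - r).+1 <= k < t.+1) Cmat P l X k.

Definition vvec (R : realType) (dO : measure_display) (Omega : measurableType dO)
  (d n : nat) (l : 'I_n -> d.-tuple R -> R)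
  (X : nat -> {mfun Omega >-> d.-tuple R}) (k : nat) (w : Omega) : 'cV[R]_n :=
  \col_i l i (X k w).

Definition Chat (R : realType) (dO : measure_display) (Omega : measurableType dO)
  (d n : nat) (l : 'I_n -> d.-tuple R -> R)
  (X : nat -> {mfun Omega >-> d.-tuple R}) (r t : nat) (w : Omega) : 'M[R]_n :=
  r%:R^-1 *: \sum_((t - r).+1 <= k < t.+1) (vvec l X k w *m (vvec l X k w)^T).

Definition Aconst (R : realType) (delta : R) (n m : nat) : R :=
  Num.sqrt (2 * ln (((2 * m - 1)%N%:R * n%:R * (n%:R - 1)) / delta)).

(* gamma_M = max_{1<=k<=m-1} sqrt(r_k / r_{k+1}) ; r indexed 1..m *)
Definition gammaM (R : realType) (r : nat -> nat) (m : nat) : R :=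
  \big[Num.max/0]_(1 <= k < m) Num.sqrt ((r k)%:R / (r k.+1)%:R).

Definition Bfun (R : realType) (dO : measure_display) (Omega : measurableType dO)
  (P : probability Omega R) (d n : nat) (l : 'I_n -> d.-tuple R -> R)
  (X : nat -> {mfun Omega >-> d.-tuple R})
  (delta beta : R) (rs : nat -> nat) (m t : nat) (r : nat) : R :=
  Aconst delta n m / Num.sqrt r%:R * ((2 * beta + 2) / (1 - gammaM R rs m))
  + supnorm (Cmat P l X t - Cbar P l X r t).

Definition Tfun (R : realType) (delta beta : R) (n : nat) (rs : nat -> nat) (m k : nat) : R :=
  2 * beta * Aconst delta n m / Num.sqrt (rs k)%:R
  + Aconst delta n m * Num.sqrt ((1 - (rs k)%:R / (rs k.+1)%:R) / (rs k)%:R).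

Definition eventE (R : realType) (dO : measure_display) (Omega : measurableType dO)
  (P : probability Omega R) (d n : nat) (l : 'I_n -> d.-tuple R -> R)
  (X : nat -> {mfun Omega >-> d.-tuple R})
  (delta : R) (rs : nat -> nat) (m t : nat) (w : Omega) : Prop :=
  (forall k, (1 <= k <= m)%N ->
     supnorm (Cmat P l X t - Chat l X (rs k) t w)
       <= Aconst delta n m / Num.sqrt (rs k)%:R
          + supnorm (Cmat P l X t - Cbar P l X (rs k) t)) /\
  (forall k, (1 <= k <= m - 1)%N ->
     supnorm (Cbar P l X (rs k) t - Cbar P l X (rs k.+1) t
              - Chat l X (rs k) t w + Chat l X (rs k.+1) t w)
       <= Aconst delta n m * Num.sqrt ((1 - (rs k)%:R / (rs k.+1)%:R) / (rs k)%:R)).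

(* Main.v *)
Require Import Defs.
From HB Require Import structures.
From mathcomp Require Import all_boot all_order all_algebra.
From mathcomp Require Import all_classical all_reals all_analysis.
Import Order.TTheory GRing.Theory Num.Theory.
Local Open Scope classical_set_scope.
Local Open Scope ring_scope.

Lemma zm (V : zmodType) (x y z p q : V) : x - z = (x - y) + ((y - z - p + q) + (p - q)).
Proof. rewrite !addrA subrK -(addrA _ q p) (addrC q p) addrA subrK addrK. done. Qed.

Lemma supnorm_ge0 (R : realType) n (M : 'M[R]_n) : 0 <= supnorm M.
Proof.
rewrite /supnorm; elim/big_ind: _ => //; first by move=> x y hx hy; rewrite le_max hx.
move=> i _; elim/big_ind: _ => //; by move=> x y hx hy; rewrite le_max hx.
Qed.

Lemma le_supnorm (R : realType) n (M : 'M[R]_n) i j : `|M i j| <= supnorm M.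
Proof.
rewrite /supnorm; apply: le_trans (le_bigmax _ _ i).
exact: (le_bigmax _ (fun j => `|M i j|) j).
Qed.

Lemma supnorm_le (R : realType) n (M : 'M[R]_n) c :
  0 <= c -> (forall i j, `|M i j| <= c) -> supnorm M <= c.
Proof.
move=> c0 H; rewrite /supnorm; apply: bigmax_le => // i _.
by apply: bigmax_le => // j _.
Qed.

Lemma supnormD (R : realType) n (M N : 'M[R]_n) :
  supnorm (M + N) <= supnorm M + supnorm N.
Proof.
apply: supnorm_le; first by rewrite addr_ge0 // supnorm_ge0.
move=> i j; rewrite mxE; apply: le_trans (ler_normD _ _) _.
by apply: lerD; apply: le_supnorm.
Qed.

Lemma tri3 (R : realType) n (M1 M2 M3 : 'M[R]_n) :
  supnorm (M1 + (M2 + M3)) <= supnorm M1 + (supnorm M2 + supnorm M3).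
Proof. apply: le_trans (supnormD _ _ _ _) _; rewrite lerD2l; exact: supnormD. Qed.

Lemma gamma_ge (R : realType) (rs : nat -> nat) m k : (1 <= k < m)%N ->
  Num.sqrt ((rs k)%:R / (rs k.+1)%:R) <= gammaM R rs m.
Proof.
move=> hk; rewrite /gammaM.
apply: (le_bigmax_seq _ _ xpredT (fun k => Num.sqrt ((rs k)%:R / (rs k.+1)%:R : R))) => //.
by rewrite mem_index_iota.
Qed.

Lemma gamma_lt1 (R : realType) (rs : nat -> nat) m :
  (forall k, (1 <= k < m)%N -> (rs k < rs k.+1)%N) -> gammaM R rs m < 1.
Proof.
move=> H; rewrite /gammaM big_nat_cond.
elim/big_rec: _ => // i x /andP[/andP[hi1 hi2] _] hx.
rewrite gt_max hx andbT -[X in _ < X]sqrtr1 ltr_sqrt // ltr_pdivrMr; last first.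
  by rewrite ltr0n; apply: leq_ltn_trans (H i _); rewrite ?hi1.
by rewrite mul1r ltr_nat H // hi1.
Qed.

Lemma rs_pos (rs : nat -> nat) m :
  (0 < rs 1)%N -> (forall k, (1 <= k < m)%N -> (rs k < rs k.+1)%N) ->
  forall k, (1 <= k <= m)%N -> (0 < rs k)%N.
Proof.
move=> h1 H; elim=> [//|k IH] /andP[hk1 hk2].
case: k IH hk1 hk2 => [|k] IH _ hk2; first done.
apply: leq_ltn_trans (H k.+1 _); last by rewrite /= hk2.
by [].
Qed.
From mathcomp Require Import lra zify.
Lemma key (R:realType) (A beta g a b S1 S2 Ev D : R) :
 0 <= A -> 0 < beta -> 0 < a -> a < b -> Num.sqrt (a/b) <= g -> g < 1 ->
 S2 <= S1 + (Ev + D) -> Ev <= A * Num.sqrt ((1-a/b)/a) ->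
 D <= 2*beta*A/Num.sqrt a + A*Num.sqrt((1-a/b)/a) ->
 A / Num.sqrt b * ((2*beta+2)/(1-g)) + S2 <= A / Num.sqrt a * ((2*beta+2)/(1-g)) + S1.
Proof.
move=> A0 b0 a0 ab hg g1 hS hE hD.
have b0' : 0 < b by apply: lt_trans ab.
set s : R := Num.sqrt a; set u : R := Num.sqrt b.
have s0 : 0 < s by rewrite sqrtr_gt0.
have u0 : 0 < u by rewrite sqrtr_gt0.
set p : R := Num.sqrt (a/b).
have hp : p = s / u by rewrite /p sqrtrM ?ltW // sqrtrV // ltW.
have hu : u^-1 = p * s^-1 by rewrite hp mulrAC divff ?mul1r // gt_eqF.
set w : R := Num.sqrt ((1-a/b)/a).
have hw : w <= s^-1.
  rewrite /w -sqrtrV; last exact: ltW. apply: ler_wsqrtr.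
  apply: ler_piMl; first by rewrite invr_ge0 ltW.
  by rewrite gerBl divr_ge0 // ltW.
have p0 : 0 <= p by apply: sqrtr_ge0.
set c := (2*beta+2)/(1-g).
have hc : 2*beta+2 <= c*(1-p).
  rewrite /c mulrAC ler_pdivlMr ?subr_gt0 //.
  apply: ler_wpM2l; first lra. by rewrite lerD2l lerN2.
have is0 : 0 < s^-1 by rewrite invr_gt0.
have := ler_wpM2l (mulr_ge0 A0 (ltW is0)) hc.
have hE' : Ev <= A * w := hE.
have hD' : D <= 2*beta*A*s^-1 + A*w := hD.
rewrite hu.
set si := s^-1 in hD' hw is0 *.
move: hE' hD' hw is0 hS hc A0 b0 p0.
clearbody si c w p s u.
clear.
move=> hE hD hw si0 hS hc A0 b0 p0 H.
have := ler_wpM2l A0 hw.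
lra.
Qed.

Theorem proposition7 (R : realType) (dO : measure_display) (Omega : measurableType dO)
  (P : probability Omega R) (d n : nat)
  (l : 'I_n -> d.-tuple R -> R)
  (X : nat -> {mfun Omega >-> d.-tuple R})
  (delta beta : R) (rs : nat -> nat) (m t : nat) (w : Omega) :
  assumption_A1 P X ->
  (forall i, measurable_fun [set: d.-tuple R] (l i)) ->
  (forall i x, l i x = 1 \/ l i x = -1) ->
  0 < delta -> 0 < beta ->
  (0 < rs 1)%N ->
  (forall k, (1 <= k < m)%N -> (rs k < rs k.+1)%N) ->
  (rs m <= t)%N ->
  eventE P l X delta rs m t w ->
  forall k, (1 <= k <= m - 1)%N ->
    supnorm (Chat l X (rs k) t w - Chat l X (rs k.+1) t w) <= Tfun delta beta n rs m k ->
    Bfun P l X delta beta rs m t (rs k.+1) <= Bfun P l X delta beta rs m t (rs k).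
Proof.
move=> _ _ _ d0 b0 h1 H hm [_ E2] k hk hT.
have km : (1 <= k < m)%N by lia.
have a0 : (0 < rs k)%N by apply: (@rs_pos rs m h1 H k); lia.
rewrite /Bfun.
apply: (@key _ _ _ _ _ _ _ _ (supnorm (Cbar P l X (rs k) t - Cbar P l X (rs k.+1) t
     - Chat l X (rs k) t w + Chat l X (rs k.+1) t w))
  (supnorm (Chat l X (rs k) t w - Chat l X (rs k.+1) t w))).
- exact: sqrtr_ge0.
- exact: b0.
- by rewrite ltr0n.
- by rewrite ltr_nat H.
- exact: gamma_ge.
- exact: gamma_lt1.
- rewrite (@zm _ (Cmat P l X t) (Cbar P l X (rs k) t) (Cbar P l X (rs k.+1) t)
            (Chat l X (rs k) t w) (Chat l X (rs k.+1) t w)).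
  exact: tri3.
- exact: E2.
- exact: hT.
Qed.
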